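(* Let $M\ge 2$, and let $(\vec n_M^\dagger,\vec P_M^\dagger)$, with $\vec n_M^\dagger\in\mathbb{R}_{>0}^M$, $\vec P_M^\dagger\in\mathbb{R}_{\ge0}^M$, satisfy $\varepsilon_{M-1}(\vec n_{M-1}^\dagger,\vec P_{M-1}^\dagger)>\varepsilon_M(\vec n_M^\dagger,\vec P_M^\dagger)$. Then the function $P\mapsto \varepsilon_M(\vec n_M^\dagger,(P_1^\dagger,\dots,P_{M-1}^\dagger,P))$ has strictly negative derivative at $P=P_M^\dagger$; in particular it is strictly decreasing in a neighborhood of $P_M^\dagger$.
   Context: Fix $B>0$. Let $Q(x)=\frac{1}{\sqrt{2\pi}}\int_x^\infty e^{-t^2/2}\,dt$. For $m\ge 1$, blocklengths $\vec n_m=(n_1,\dots,n_m)$ with $n_i>0$ and powers $\vec P_m=(P_1,\dots,P_m)$ with $P_i\ge 0$ (not all zero), define $$\varepsilon_m(\vec n_m,\vec P_m)=Q\!\left(\frac{\sum_{i=1}^m n_i\ln(1+P_i)-B\ln 2}{\sqrt{\sum_{i=1}^m \frac{n_iP_i(P_i+2)}{(P_i+1)^2}}}\right).$$ *)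

(* Defs.v *)
From Stdlib Require Import Reals Lra ClassicalEpsilon.
Open Scope R_scope.

Definition gauss (t : R) : R := exp (- (t ^ 2) / 2).

Lemma gauss_cont : continuity gauss.
Proof.
  unfold gauss.
  apply (continuity_comp (fun t => - (t ^ 2) / 2) exp).
  - intro x. unfold Rdiv.
    apply continuity_pt_mult.
    + apply continuity_pt_opp. apply derivable_continuous_pt.
      apply derivable_pt_pow.
    + apply continuity_pt_const. intros a b; reflexivity.
  - intro x. apply derivable_continuous_pt. apply derivable_pt_exp.
Qed.

(* Riemann integral of gauss on [a,b] (0 if a > b; only used with a <= b). *)
Definition gauss_int (a b : R) : R :=
  match Rle_dec a b with
  | left H => RiemannInt (@continuity_implies_RiemannInt gauss a b H
                            (fun y _ => gauss_cont y))
  | right _ => 0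
  end.

Definition is_gauss_tail (x q : R) : Prop :=
  forall eps, 0 < eps -> exists N, forall b, N <= b -> Rabs (gauss_int x b - q) < eps.

Definition Qfun (x : R) : R :=
  / sqrt (2 * PI) * epsilon (inhabits 0) (fun q => is_gauss_tail x q).

Fixpoint rsum (m : nat) (f : nat -> R) : R :=
  match m with
  | O => 0
  | S k => rsum k f + f k
  end.

(* vectors n_m = (n 0, ..., n (m-1)), P_m = (P 0, ..., P (m-1)) *)
Definition epsm (B : R) (m : nat) (n P : nat -> R) : R :=
  Qfun ((rsum m (fun i => n i * ln (1 + P i)) - B * ln 2)
        / sqrt (rsum m (fun i => n i * P i * (P i + 2) / (P i + 1) ^ 2))).

Definition upd (P : nat -> R) (j : nat) (p : R) : nat -> R :=
  fun i => if Nat.eqb i j then p else P i.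

(* Main.v *)
Require Import Defs.
From Stdlib Require Import Reals Lra Psatz Lia ClassicalEpsilon Classical.
From Coquelicot Require Import Coquelicot.
Open Scope R_scope.

Definition G (x:R) := RInt gauss 0 x.

Lemma gauss_pos t : 0 < gauss t.
Proof. unfold gauss; apply exp_pos. Qed.
Lemma gauss_continuous t : continuous gauss t.
Proof. apply continuity_pt_filterlim, gauss_cont. Qed.
Lemma ex_RInt_gauss a b : ex_RInt gauss a b.
Proof. apply (@ex_RInt_continuous R_CompleteNormedModule); intros; apply gauss_continuous. Qed.

Lemma G_chasles a b : G b = G a + RInt gauss a b.
Proof.
  unfold G. rewrite <- (RInt_Chasles gauss 0 a b) by apply ex_RInt_gauss.
  reflexivity.
Qed.

Lemma gauss_int_G a b : a <= b -> gauss_int a b = G b - G a.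
Proof.
  intros H. unfold gauss_int. destruct (Rle_dec a b); [|lra].
  rewrite <- RInt_Reals. pose proof (G_chasles a b) as HC.
  set (rr := RInt gauss a b) in *. change (rr = G b - G a). lra.
Qed.

Lemma G_mono a b : a <= b -> G a <= G b.
Proof.
  intros H. rewrite (G_chasles a b).
  assert (0 <= RInt gauss a b).
  { apply RInt_ge_0; auto. apply ex_RInt_gauss. intros; left; apply gauss_pos. }
  lra.
Qed.

Lemma G_derive x : is_derive G x (gauss x).
Proof.
  apply is_derive_RInt with 0.
  - apply filter_forall. intros; apply RInt_correct, ex_RInt_gauss.
  - apply gauss_continuous.
Qed.

Lemma G_bound b : G b <= exp (1/2).
Proof.
  destruct (Rle_lt_dec b 0) as [Hb|Hb].
  - assert (G b <= G 0) by (apply G_mono; auto).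
    unfold G at 2 in H. rewrite RInt_point in H. 
    pose proof (exp_pos (1/2)). change (G b <= zero) in H. unfold zero in H; simpl in H. lra.
  - assert (Hi : is_RInt (fun t => exp (1/2 - t)) 0 b
                   (minus ((fun t => - exp (1/2 - t)) b) ((fun t => - exp (1/2 - t)) 0))).
    { apply (@is_RInt_derive R_CompleteNormedModule (fun t => - exp (1/2 - t)) (fun t => exp (1/2 - t))).
      - intros x _. auto_derive; auto. unfold Rminus; ring.
      - intros x _. apply continuity_pt_filterlim.
        apply derivable_continuous_pt. 
        apply (derivable_pt_comp (fun t => 1/2 - t) exp).
        + apply derivable_pt_minus. apply derivable_pt_const. apply derivable_pt_id.
        + apply derivable_pt_exp. }
    assert (G b <= RInt (fun t => exp (1/2 - t)) 0 b).
    { apply RInt_le. lra. apply ex_RInt_gauss. eexists; exact Hi.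
      intros t _. unfold gauss.
      assert (E : - t ^ 2 / 2 <= 1/2 - t) by (assert (0 <= (t-1)^2) by (apply pow2_ge_0); lra).
      destruct E as [E|E].
      + left. apply exp_increasing. exact E.
      + rewrite E; lra. }
    rewrite (is_RInt_unique _ _ _ _ Hi) in H.
    unfold minus, plus, opp in H; simpl in H.
    pose proof (exp_pos (1/2 - b)). replace (1/2 - 0) with (1/2) in H by ring. lra.
Qed.

Definition EG (y:R) : Prop := exists b, y = G b.
Lemma EG_bound : bound EG.
Proof. exists (exp (1/2)). intros y [b ->]. apply G_bound. Qed.
Lemma EG_ne : exists y, EG y.
Proof. exists (G 0), 0. reflexivity. Qed.
Definition Lg : R := proj1_sig (completeness EG EG_bound EG_ne).
Lemma Lg_lub : is_lub EG Lg.
Proof. unfold Lg. destruct (completeness EG EG_bound EG_ne); auto. Qed.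

Lemma tail_ex x : is_gauss_tail x (Lg - G x).
Proof.
  intros eps Heps. destruct Lg_lub as [Hub Hl].
  assert (exists b0, Lg - eps < G b0) as [b0 Hb0].
  { destruct (classic (exists b0, Lg - eps < G b0)) as [H|H]; auto.
    exfalso. assert (Lg <= Lg - eps); [|lra].
    apply Hl. intros y [b ->]. apply Rnot_lt_le. intro H'. apply H. exists b; auto. }
  exists (Rmax x b0). intros b Hb.
  rewrite gauss_int_G by (pose proof (Rmax_l x b0); lra).
  assert (G b0 <= G b) by (apply G_mono; pose proof (Rmax_r x b0); lra).
  assert (G b <= Lg) by (apply Hub; exists b; auto).
  rewrite Rabs_left1; lra.
Qed.

Lemma tail_unique x q1 q2 : is_gauss_tail x q1 -> is_gauss_tail x q2 -> q1 = q2.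
Proof.
  intros H1 H2. destruct (Req_dec q1 q2) as [|Hne]; auto. exfalso.
  assert (Hne' : q1 - q2 <> 0) by (intro; apply Hne; lra).
  assert (Hd : 0 < Rabs (q1 - q2) / 2) by (apply Rabs_pos_lt in Hne'; lra).
  destruct (H1 _ Hd) as [N1 HN1]. destruct (H2 _ Hd) as [N2 HN2].
  specialize (HN1 (Rmax N1 N2) (Rmax_l _ _)). specialize (HN2 (Rmax N1 N2) (Rmax_r _ _)).
  set (g := gauss_int x (Rmax N1 N2)) in *.
  assert (Rabs (q1 - q2) <= Rabs (g - q2) + Rabs (g - q1)).
  { replace (q1 - q2) with ((g - q2) + (q1 - g)) by ring.
    eapply Rle_trans; [apply Rabs_triang|]. rewrite (Rabs_minus_sym q1 g). lra. }
  lra.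
Qed.

Definition cQ := / sqrt (2 * PI).
Lemma cQ_pos : 0 < cQ.
Proof. unfold cQ. apply Rinv_0_lt_compat, sqrt_lt_R0. pose proof PI_RGT_0; lra. Qed.

Lemma Qfun_eq x : Qfun x = cQ * (Lg - G x).
Proof.
  unfold Qfun, cQ. f_equal. apply (tail_unique x).
  - apply epsilon_spec. exists (Lg - G x). apply tail_ex.
  - apply tail_ex.
Qed.

Lemma Qfun_derive x : is_derive Qfun x (- cQ * gauss x).
Proof.
  apply (is_derive_ext (fun y => cQ * (Lg - G y))).
  { intros; symmetry; apply Qfun_eq. }
  replace (- cQ * gauss x) with (cQ * (0 - gauss x)) by ring.
  apply (is_derive_scal (fun y => Lg - G y)).
  apply (is_derive_minus (fun _ => Lg) G). apply (is_derive_const (K:=R_AbsRing) (V:=R_NormedModule)). apply G_derive.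
Qed.

Lemma Qfun_mono x y : x <= y -> Qfun y <= Qfun x.
Proof.
  intros H. rewrite !Qfun_eq. pose proof (G_mono _ _ H). pose proof cQ_pos.
  apply Rmult_le_compat_l; lra.
Qed.

Lemma key_alg a v A0 V0 N : 0<N -> 0<V0 -> 0<a -> 0 <= v -> 2*a*(1-v) <= v -> v < 1 ->
  A0/sqrt V0 < (A0+N*a)/sqrt(V0+N*v) -> 0 < (V0 + N*v) - (A0 + N*a)*(1-v).
Proof.
  intros HN HV0 Ha Hv Hk Hv1 H.
  set (S := A0 + N*a) in *. set (V := V0 + N*v) in *.
  assert (HV : 0 < V) by (unfold V; nra).
  destruct (Rle_lt_dec S 0) as [HS|HS].
  { nra. }
  destruct (Rle_lt_dec A0 0) as [HA|HA].
  { assert (S <= N*a) by (unfold S in *; lra).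
    assert ((N*a - S)*(1-v) >= 0) by nra.
    assert (N*(v - 2*a*(1-v)) >= 0) by nra.
    assert (0 <= N*v) by nra. unfold V. lra. }
  assert (Hs0 := sqrt_lt_R0 V0 HV0). assert (Hsv := sqrt_lt_R0 V HV).
  assert (E0 := sqrt_sqrt V0 (Rlt_le _ _ HV0)). assert (Ev := sqrt_sqrt V (Rlt_le _ _ HV)).
  assert (H1 : A0 * sqrt V < S * sqrt V0).
  { apply (Rmult_lt_compat_r (sqrt V0 * sqrt V)) in H; [|nra].
    replace (A0 / sqrt V0 * (sqrt V0 * sqrt V)) with (A0 * sqrt V) in H by (field; lra).
    replace (S / sqrt V * (sqrt V0 * sqrt V)) with (S * sqrt V0) in H by (field; lra).
    exact H. }
  assert (H2 : A0*A0 * V < S*S*V0).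
  { assert (0 < A0 * sqrt V) by nra.
    assert ((A0 * sqrt V) * (A0 * sqrt V) < (S * sqrt V0) * (S * sqrt V0)) by nra.
    replace (A0*A0*V) with ((A0 * sqrt V) * (A0 * sqrt V)) by (transitivity (A0*A0*(sqrt V*sqrt V)); [ring| rewrite Ev; ring]).
    replace (S*S*V0) with ((S * sqrt V0) * (S * sqrt V0)) by (transitivity (S*S*(sqrt V0*sqrt V0)); [ring| rewrite E0; ring]).
    exact H1 || lra. }
  assert (HA0 : A0 = S - N*a) by (unfold S; ring).
  assert (HV0' : V0 = V - N*v) by (unfold V; ring).
  clearbody S V. rewrite HA0, HV0' in H2.
  assert (H3 : N * (N*a*a*V + S*S*v - 2*a*S*V) < 0).
  { assert (E : (S - N*a)*(S - N*a)*V - S*S*(V - N*v) = N * (N*a*a*V + S*S*v - 2*a*S*V)) by ring.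
    rewrite <- E. apply Rlt_minus. exact H2. }
  assert (H4 : N*a*a*V + S*S*v - 2*a*S*V < 0) by nra.
  assert (H45 : 0 <= N*a*a*V) by (repeat apply Rmult_le_pos; lra).
  assert (H5 : S*S*v < 2*a*S*V) by lra.
  assert (H6 : S*v < 2*a*V) by nra.
  assert (H7 : v * (V - S*(1-v)) > 0) by nra.
  nra.
Qed.
Section S.
Variables RA RV N c0 : R.
Definition sF p := RA + N * ln (1 + p) - c0.
Definition wF p := RV + N * p * (p + 2) / (p + 1) ^ 2.
Definition fR p := sF p / sqrt (wF p).
Definition hF p := wF p - sF p / (1 + p) ^ 2.
Definition dsF p := N / (1 + p).
Definition dwF p := 2 * N / (1 + p) ^ 3.
Definition dfF p := (dsF p * sqrt (wF p) - sF p * (dwF p / (2 * sqrt (wF p)))) / (sqrt (wF p)) ^ 2.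

Lemma sF_der p : 0 < 1 + p -> is_derive sF p (dsF p).
Proof. intros H. unfold sF, dsF. auto_derive. lra. field. lra. Qed.

Lemma wF_der p : 0 < 1 + p -> is_derive wF p (dwF p).
Proof. intros H. unfold wF, dwF. auto_derive.
  - assert (0 < (p+1)*((p+1)*1)) by nra. lra.
  - field. lra. Qed.

Lemma fR_der p : 0 < 1 + p -> 0 < wF p -> is_derive fR p (dfF p).
Proof.
  intros H1 H2. unfold fR, dfF.
  apply (is_derive_div sF (fun t => sqrt (wF t))). apply sF_der; auto.
  apply (is_derive_sqrt wF). apply wF_der; auto. auto.
  apply Rgt_not_eq, sqrt_lt_R0; auto.
Qed.

Lemma dfF_pos p : 0 < 1 + p -> 0 < wF p -> 0 < N -> 0 < hF p -> 0 < dfF p.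
Proof.
  intros H1 H2 HN Hh. unfold dfF.
  assert (Hu := sqrt_lt_R0 _ H2). assert (Eu := sqrt_sqrt _ (Rlt_le _ _ H2)).
  set (u := sqrt (wF p)) in *.
  set (X := dsF p * u - sF p * (dwF p / (2 * u))).
  assert (EX : X * u = dsF p * (u * u) - sF p * dwF p / 2) by (unfold X; field; lra).
  rewrite Eu in EX.
  assert (EX2 : dsF p * wF p - sF p * dwF p / 2 = N / (1 + p) * hF p)
    by (unfold dsF, dwF, hF; field; lra).
  assert (0 < N / (1 + p) * hF p) by (apply Rmult_lt_0_compat; auto; apply Rdiv_lt_0_compat; auto).
  assert (0 < X) by nra.
  apply Rdiv_lt_0_compat; auto. apply pow_lt; auto.
Qed.
End S.

Lemma lnbound y : 1 <= y -> 2 * ln y <= y ^ 2 - 1.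
Proof.
  intros H. pose proof (exp_ineq1_le (ln y)). rewrite exp_ln in H0 by lra. nra.
Qed.

Lemma core (RA RV N c0 x0 : R) : 0 < N -> 0 < RV -> 0 < x0 ->
  (RA - c0)/sqrt RV < fR RA RV N c0 x0 ->
  (exists l, is_derive (fun p => Qfun (fR RA RV N c0 p)) x0 l /\ l < 0) /\
  (exists delta, 0 < delta /\ forall x y, Rabs (x - x0) < delta -> Rabs (y - x0) < delta -> x < y ->
     Qfun (fR RA RV N c0 y) < Qfun (fR RA RV N c0 x)).
Proof.
  intros HN HRV Hx0 Hlt.
  set (F := fun p => Qfun (fR RA RV N c0 p)).
  assert (Hh0 : 0 < hF RA RV N c0 x0).
  { set (a := ln (1 + x0)). set (v := x0 * (x0 + 2) / (x0 + 1) ^ 2).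
    assert (Ha : 0 < a) by (unfold a; rewrite <- ln_1; apply ln_increasing; lra).
    assert (Hv1 : 1 - v = / (1 + x0) ^ 2) by (unfold v; field; lra).
    assert (Hy : 0 < / (1 + x0) ^ 2) by (apply Rinv_0_lt_compat, pow_lt; lra).
    assert (Hv : 0 <= v) by (unfold v; apply Rmult_le_pos; [nra| left; apply Rinv_0_lt_compat, pow_lt; lra]).
    assert (Hk : 2 * a * (1 - v) <= v).
    { rewrite Hv1. pose proof (lnbound (1 + x0)) as L. fold a in L.
      assert (E : v = ((1+x0)^2 - 1) * / (1 + x0)^2) by (unfold v; field; lra).
      rewrite E. apply Rmult_le_compat_r; lra. }
    assert (H := key_alg a v (RA - c0) RV N HN HRV Ha Hv Hk ltac:(lra)).
    replace (hF RA RV N c0 x0) with (RV + N * v - (RA - c0 + N * a) * (1 - v)).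
    2:{ unfold hF, wF, sF, v, a. field. lra. }
    apply H.
    unfold fR, sF, wF in Hlt.
    replace (RA - c0 + N * a) with (RA + N * ln (1 + x0) - c0) by (unfold a; ring).
    replace (RV + N * v) with (RV + N * x0 * (x0 + 2) / (x0 + 1) ^ 2) by (unfold v; field; lra).
    exact Hlt. }
  assert (Hc : continuity_pt (hF RA RV N c0) x0).
  { apply continuity_pt_filterlim. apply (ex_derive_continuous (K:=R_AbsRing) (V:=R_NormedModule)).
    unfold hF, wF, sF. auto_derive. repeat split; try lra; nra. }
  destruct (Hc (hF RA RV N c0 x0) Hh0) as [alp [Halp Hal]].
  set (dF := fun p => dfF RA RV N c0 p * (- cQ * gauss (fR RA RV N c0 p))).
  assert (Hw : forall p, 0 < p -> 0 < wF RV N p).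
  { intros p Hp. unfold wF. assert (0 <= N * p * (p + 2) / (p + 1) ^ 2); [|lra].
    unfold Rdiv. apply Rmult_le_pos. apply Rmult_le_pos; nra.
    left; apply Rinv_0_lt_compat, pow_lt; lra. }
  assert (Hgood : forall p, 0 < p -> 0 < hF RA RV N c0 p -> is_derive F p (dF p) /\ dF p < 0).
  { intros p Hp Hh. split.
    - unfold F, dF. apply (is_derive_comp Qfun (fR RA RV N c0)).
      apply Qfun_derive. apply fR_der; auto; lra.
    - unfold dF. pose proof (dfF_pos RA RV N c0 p ltac:(lra) (Hw p Hp) HN Hh).
      pose proof cQ_pos. pose proof (gauss_pos (fR RA RV N c0 p)).
      assert (0 < cQ * gauss (fR RA RV N c0 p)) by (apply Rmult_lt_0_compat; auto).
      nra. }
  set (delta := Rmin alp x0).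
  assert (Hball : forall p, Rabs (p - x0) < delta -> 0 < p /\ 0 < hF RA RV N c0 p).
  { intros p Hp. assert (Hd1 := Rmin_l alp x0). assert (Hd2 := Rmin_r alp x0).
    fold delta in Hd1, Hd2. apply Rabs_def2 in Hp as [Hp1 Hp2]. split. lra.
    assert (Hd : R_dist p x0 < alp) by (unfold R_dist; apply Rabs_def1; lra).
    destruct (Req_dec p x0) as [->|Hne]; auto.
    assert (HD : D_x no_cond x0 p) by (split; [exact I| auto]).
    specialize (Hal p (conj HD Hd)). simpl in Hal. unfold R_dist in Hal.
    apply Rabs_def2 in Hal. lra. }
  split.
  - exists (dF x0). apply Hgood; auto.
  - exists delta. split. { apply Rmin_glb_lt; auto. }
    intros x y Hx Hy Hxy.
    assert (Hin : forall t, x <= t <= y -> Rabs (t - x0) < delta).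
    { intros t Ht. apply Rabs_def2 in Hx. apply Rabs_def2 in Hy. apply Rabs_def1; lra. }
    destruct (MVT_gen F x y dF) as [c [Hc1 Hc2]].
    + intros t Ht. rewrite Rmin_left, Rmax_right in Ht by lra.
      destruct (Hball t (Hin t ltac:(lra))). apply Hgood; auto.
    + intros t Ht. rewrite Rmin_left, Rmax_right in Ht by lra.
      destruct (Hball t (Hin t ltac:(lra))).
      apply continuity_pt_filterlim. apply (ex_derive_continuous (K:=R_AbsRing) (V:=R_NormedModule)).
      exists (dF t). apply Hgood; auto.
    + rewrite Rmin_left, Rmax_right in Hc1 by lra.
      destruct (Hball c (Hin c Hc1)). destruct (Hgood c) as [_ Hneg]; auto.
      unfold F in Hc2. nra.
Qed.

Lemma rsum_ext k f g : (forall i, (i < k)%nat -> f i = g i) -> rsum k f = rsum k g.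
Proof.
  induction k; intros H; simpl; auto.
  rewrite IHk by (intros; apply H; lia). rewrite H by lia. auto.
Qed.

Lemma rsum_nonneg k f : (forall i, (i < k)%nat -> 0 <= f i) -> 0 <= rsum k f.
Proof.
  induction k; intros H; simpl. lra.
  pose proof (H k ltac:(lia)). assert (0 <= rsum k f) by (apply IHk; intros; apply H; lia). lra.
Qed.

Lemma rsum_pos k f : (forall i, (i < k)%nat -> 0 <= f i) -> (exists i, (i < k)%nat /\ 0 < f i) ->
  0 < rsum k f.
Proof.
  induction k; intros H [j [Hj Hf]]; simpl. lia.
  pose proof (H k ltac:(lia)).
  destruct (Nat.eq_dec j k) as [->|Hne].
  - assert (0 <= rsum k f) by (apply rsum_nonneg; intros; apply H; lia). lra.
  - assert (0 < rsum k f) by (apply IHk; [intros; apply H; lia| exists j; split; auto; lia]). lra.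
Qed.

Theorem lemma2 (B : R) (M : nat) (n P : nat -> R) :
  0 < B ->
  (2 <= M)%nat ->
  (forall i, (i < M)%nat -> 0 < n i) ->
  (forall i, (i < M)%nat -> 0 <= P i) ->
  (exists i, (i < M - 1)%nat /\ P i <> 0) ->
  epsm B (M - 1) n P > epsm B M n P ->
  (exists l, derivable_pt_lim (fun p => epsm B M n (upd P (M - 1) p)) (P (M - 1)%nat) l
             /\ l < 0)
  /\
  (exists delta, 0 < delta /\
     forall x y, Rabs (x - P (M - 1)%nat) < delta -> Rabs (y - P (M - 1)%nat) < delta ->
       x < y -> epsm B M n (upd P (M - 1) y) < epsm B M n (upd P (M - 1) x)).
Proof.
  intros HB HM Hn HP Hex Heps.
  destruct M as [|K]; [lia|].
  assert (HK : (S K - 1)%nat = K) by lia. rewrite HK in *.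
  set (a := fun i => n i * ln (1 + P i)).
  set (g := fun i => n i * P i * (P i + 2) / (P i + 1) ^ 2).
  set (RA := rsum K a). set (RV := rsum K g). set (N := n K). set (c0 := B * ln 2).
  assert (E1 : forall p, epsm B (S K) n (upd P K p) = Qfun (fR RA RV N c0 p)).
  { intros p. unfold epsm, fR, sF, wF. cbn [rsum].
    rewrite (rsum_ext K (fun i => n i * ln (1 + upd P K p i)) a).
    2:{ intros i Hi. unfold upd, a. rewrite (proj2 (Nat.eqb_neq i K)) by lia. reflexivity. }
    rewrite (rsum_ext K (fun i => n i * upd P K p i * (upd P K p i + 2) / (upd P K p i + 1) ^ 2) g).
    2:{ intros i Hi. unfold upd, g. rewrite (proj2 (Nat.eqb_neq i K)) by lia. reflexivity. }
    unfold upd. rewrite Nat.eqb_refl. reflexivity. }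
  assert (E2 : epsm B (S K) n P = Qfun (fR RA RV N c0 (P K))).
  { unfold epsm, fR, sF, wF. cbn [rsum]. reflexivity. }
  assert (E3 : epsm B K n P = Qfun ((RA - c0) / sqrt RV)) by reflexivity.
  assert (HN : 0 < N) by (apply Hn; lia).
  assert (HRV : 0 < RV).
  { apply rsum_pos.
    - intros i Hi. unfold g. pose proof (Hn i ltac:(lia)). pose proof (HP i ltac:(lia)).
      unfold Rdiv. apply Rmult_le_pos. apply Rmult_le_pos; nra.
      left; apply Rinv_0_lt_compat, pow_lt; lra.
    - destruct Hex as [i [Hi Hne]]. exists i. split; auto.
      pose proof (Hn i ltac:(lia)). pose proof (HP i ltac:(lia)).
      assert (0 < P i) by lra. unfold g.
      unfold Rdiv. apply Rmult_lt_0_compat. apply Rmult_lt_0_compat; nra.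
      apply Rinv_0_lt_compat, pow_lt; lra. }
  rewrite E2, E3 in Heps.
  assert (Hx0 : 0 < P K).
  { pose proof (HP K ltac:(lia)). destruct H as [H|H]; auto. exfalso.
    rewrite <- H in Heps. unfold fR, sF, wF in Heps.
    replace (1 + 0) with 1 in Heps by ring. rewrite ln_1 in Heps.
    replace (RA + N * 0 - c0) with (RA - c0) in Heps by ring.
    replace (RV + N * 0 * (0 + 2) / (0 + 1) ^ 2) with RV in Heps by (field; lra). lra. }
  assert (Hlt : (RA - c0) / sqrt RV < fR RA RV N c0 (P K)).
  { destruct (Rlt_le_dec ((RA - c0) / sqrt RV) (fR RA RV N c0 (P K))) as [H|H]; auto.
    apply Qfun_mono in H. lra. }
  destruct (core RA RV N c0 (P K) HN HRV Hx0 Hlt) as [[l [Hl Hl0]] [delta [Hd Hdec]]].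
  split.
  - exists l. split; auto. apply is_derive_Reals.
    apply (is_derive_ext (fun p => Qfun (fR RA RV N c0 p))).
    + intros t; symmetry; exact (E1 t).
    + exact Hl.
  - exists delta. split; auto. intros x y Hx Hy Hxy. rewrite !E1. apply Hdec; auto.
Qed.
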